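(* Fix $n\ge0$. For every formula $\phi\in\mathcal{L}^1$ and label $w$, every labelled sequent generated during the computation of $\mathtt{Prove_n}(w:\phi)$ is forestlike.
   Context: Single-agent setting: $Ag=\{1\}$. Formulas $\phi ::= p \mid \overline{p} \mid (\phi\wedge\phi) \mid (\phi\vee\phi) \mid \Box\phi \mid \Diamond\phi \mid [1]\phi \mid \langle 1\rangle\phi$; $\overline{\phi}$ swaps $p/\overline{p}$, $\wedge/\vee$, $\Box/\Diamond$, $[1]/\langle 1\rangle$. A labelled sequent $\mathcal{R},\Gamma$ consists of relational atoms $\mathcal{R}_1xy$ and labelled formulas $x:\phi$. Graphs. The graph $G(\Lambda)$ of a sequent $\Lambda$ has the labels of $\Lambda$ as vertices and a directed edge $(x,y)$ for each $\mathcal{R}_1xy\in\Lambda$; each vertex $x$ is labelled by the formulas $\phi$ with $x:\phi\in\Lambda$. A graph is a tree iff there is a node (root) with exactly one directed path to every other node; a forest is a disjoint union of trees. $\Lambda$ is forestlike iff $G(\Lambda)$ is a forest; each tree of it is a choice-tree, and $CT(w)$ denotes the choice-tree containing label $w$. For a forestlike $\Lambda$ and label $w$: $w$ is saturated iff (i) $w:\phi\in\Lambda$ implies $w:\overline{\phi}\notin\Lambda$, (ii) $w:\phi\vee\psi\in\Lambda$ implies $w:\phi\in\Lambda$ and $w:\psi\in\Lambda$, (iii) $w:\phi\wedge\psi\in\Lambda$ implies $w:\phi\in\Lambda$ or $w:\psi\in\Lambda$. $w$ is $\Box$-realized iff for each $w:\Box\phi\in\Lambda$ some label $u$ has $u:\phi\in\Lambda$;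 $[1]$-realized iff for each $w:[1]\phi\in\Lambda$ some $u$ in $CT(w)$ has $u:\phi\in\Lambda$; $\Diamond$-propagated iff for each $w:\Diamond\phi\in\Lambda$, $u:\phi\in\Lambda$ for all labels $u$ of $\Lambda$; $\langle1\rangle$-propagated iff for each $w:\langle1\rangle\phi\in\Lambda$, $u:\phi\in\Lambda$ for all $u$ in $CT(w)$. $\Lambda$ is $n$-choice consistent (for $n>0$) iff $G(\Lambda)$ has at most $n$ choice-trees. $\Lambda$ is stable iff all labels are saturated, $\Box$- and $[1]$-realized, $\Diamond$- and $\langle1\rangle$-propagated, and (when $n>0$) $\Lambda$ is $n$-choice consistent. Algorithm $\mathtt{Prove_n}(\mathcal{R},\Gamma)$ (returns true/false), steps tried in order: 1. If $\mathcal{R},\Gamma$ contains $w:p$ and $w:\overline{p}$ for some $w,p$, return true. 2. If $\mathcal{R},\Gamma$ is stable, return false. 3. If some label $w$ is not saturated: (i) if $w:\phi\vee\psi$ is present but $w:\phi$ or $w:\psi$ is absent, return $\mathtt{Prove_n}(\mathcal{R},w:\phi,w:\psi,\Gamma)$; (ii) if $w:\phi\wedge\psi$ is present but neither $w:\phi$ nor $w:\psi$ is, return false if $\mathtt{Prove_n}(\mathcal{R},w:\phi,\Gamma)$ or $\mathtt{Prove_n}(\mathcal{R},w:\psi,\Gamma)$ returns false, and true otherwise. 4. If some label $w$ is not $\langle1\rangle$-propagated, i.e. some $w:\langle1\rangle\phi$ is present and some $u$ in $CT(w)$ has $u:\phi$ absent, return $\mathtt{Prove_n}(\mathcal{R},u:\phi,\Gamma)$.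 5. If some $w$ is not $\Diamond$-propagated, i.e. some $w:\Diamond\phi$ is present and some label $u$ has $u:\phi$ absent, return $\mathtt{Prove_n}(\mathcal{R},u:\phi,\Gamma)$. 6. If some $w$ is not $[1]$-realized, i.e. some $w:[1]\phi$ is present with $u:\phi$ absent for every $u$ in $CT(w)$, return $\mathtt{Prove_n}(\mathcal{R},\mathcal{R}_1wv,v:\phi,\Gamma)$ with $v$ a fresh label. 7. If some $w$ is not $\Box$-realized, i.e. some $w:\Box\phi$ is present with $u:\phi$ absent for every label $u$, return $\mathtt{Prove_n}(\mathcal{R},v:\phi,\Gamma)$ with $v$ fresh. 8. (Only when $n>0$.) If $\mathcal{R},\Gamma$ is not $n$-choice consistent, pick distinct roots $w_0,\dots,w_n$ of choice-trees and, for each $0\le k\le n-1$, $k+1\le j\le n$, compute $\mathtt{Prove_n}(\mathcal{R},\mathcal{R}_1w_kw_j,\Gamma)$; return false if some call returns false, and true otherwise. For $n=0$ step 8 is absent and stability does not include $n$-choice consistency. *)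

(* Defs.v *)
From Stdlib Require Import List Relations Arith.
Import ListNotations.

(* Formulas of L^1 in negation normal form; [1] = Stit, <1> = CStit. *)
Inductive form : Type :=
| Var (p : nat) | NVar (p : nat)
| And (a b : form) | Or (a b : form)
| Box (a : form) | Dia (a : form)
| Stit (a : form) | CStit (a : form).

Fixpoint neg (f : form) : form :=
  match f with
  | Var p => NVar p | NVar p => Var p
  | And a b => Or (neg a) (neg b) | Or a b => And (neg a) (neg b)
  | Box a => Dia (neg a) | Dia a => Box (neg a)
  | Stit a => CStit (neg a) | CStit a => Stit (neg a)
  end.

Definition label := nat.

(* A labelled sequent R,Gamma: relational atoms R_1 x y (pairs (x,y)) and
   labelled formulas x:phi (pairs (x,phi)); lists are read as sets (membership). *)
Record sequent := Seq { rels : list (label * label); fmls : list (label * form) }.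

Definition edge (S : sequent) (x y : label) : Prop := In (x, y) (rels S).

Definition is_label (S : sequent) (x : label) : Prop :=
  (exists y, In (x, y) (rels S) \/ In (y, x) (rels S)) \/
  (exists f, In (x, f) (fmls S)).

(* weak (undirected) connectedness in G(S); u is in CT(w) iff is_label S u /\ ucon S w u *)
Definition ucon (S : sequent) : label -> label -> Prop :=
  clos_refl_sym_trans label (edge S).

(* directed walk x -> l_1 -> ... -> l_k = y  (l lists the vertices after x) *)
Fixpoint walk (S : sequent) (x : label) (l : list label) (y : label) : Prop :=
  match l with
  | [] => x = y
  | z :: l' => edge S x z /\ walk S z l' y
  end.

Definition unique_walk (S : sequent) (r u : label) : Prop :=
  (exists l, walk S r l u) /\
  (forall l1 l2, walk S r l1 u -> walk S r l2 u -> l1 = l2).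

Definition is_root (S : sequent) (r : label) : Prop :=
  is_label S r /\ forall u, ucon S r u -> u <> r -> unique_walk S r u.

Definition forestlike (S : sequent) : Prop :=
  forall x, is_label S x -> exists r, ucon S r x /\ is_root S r.

Definition choice_consistent (n : nat) (S : sequent) : Prop :=
  exists ws : list label, length ws <= n /\
    forall x, is_label S x -> exists w, In w ws /\ ucon S w x.

Definition saturated (S : sequent) (w : label) : Prop :=
  (forall f, In (w, f) (fmls S) -> ~ In (w, neg f) (fmls S)) /\
  (forall a b, In (w, Or a b) (fmls S) -> In (w, a) (fmls S) /\ In (w, b) (fmls S)) /\
  (forall a b, In (w, And a b) (fmls S) -> In (w, a) (fmls S) \/ In (w, b) (fmls S)).

Definition box_realized (S : sequent) (w : label) : Prop :=
  forall a, In (w, Box a) (fmls S) -> exists u, In (u, a) (fmls S).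

Definition stit_realized (S : sequent) (w : label) : Prop :=
  forall a, In (w, Stit a) (fmls S) -> exists u, ucon S w u /\ In (u, a) (fmls S).

Definition dia_propagated (S : sequent) (w : label) : Prop :=
  forall a, In (w, Dia a) (fmls S) -> forall u, is_label S u -> In (u, a) (fmls S).

Definition cstit_propagated (S : sequent) (w : label) : Prop :=
  forall a, In (w, CStit a) (fmls S) ->
    forall u, is_label S u -> ucon S w u -> In (u, a) (fmls S).

Definition stable (n : nat) (S : sequent) : Prop :=
  (forall w, is_label S w ->
     saturated S w /\ box_realized S w /\ stit_realized S w /\
     dia_propagated S w /\ cstit_propagated S w) /\
  (0 < n -> choice_consistent n S).

Definition clash (S : sequent) : Prop :=
  exists w p, In (w, Var p) (fmls S) /\ In (w, NVar p) (fmls S).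

(* applicability of steps 3..7 (existence of an instance) *)
Definition inst3 (S : sequent) : Prop :=
  (exists w a b, In (w, Or a b) (fmls S) /\
      (~ In (w, a) (fmls S) \/ ~ In (w, b) (fmls S))) \/
  (exists w a b, In (w, And a b) (fmls S) /\
      ~ In (w, a) (fmls S) /\ ~ In (w, b) (fmls S)).
Definition inst4 (S : sequent) : Prop :=
  exists w a u, In (w, CStit a) (fmls S) /\ is_label S u /\ ucon S w u /\
    ~ In (u, a) (fmls S).
Definition inst5 (S : sequent) : Prop :=
  exists w a u, In (w, Dia a) (fmls S) /\ is_label S u /\ ~ In (u, a) (fmls S).
Definition inst6 (S : sequent) : Prop :=
  exists w a, In (w, Stit a) (fmls S) /\
    forall u, is_label S u -> ucon S w u -> ~ In (u, a) (fmls S).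
Definition inst7 (S : sequent) : Prop :=
  exists w a, In (w, Box a) (fmls S) /\
    forall u, is_label S u -> ~ In (u, a) (fmls S).

Definition add_f (S : sequent) (l : list (label * form)) : sequent :=
  Seq (rels S) (l ++ fmls S).
Definition add_r (S : sequent) (e : label * label) : sequent :=
  Seq (e :: rels S) (fmls S).

(* gen_step n S S' : the computation of Prove_n(S) makes the recursive call Prove_n(S'). *)
Inductive gen_step (n : nat) : sequent -> sequent -> Prop :=
| step3_or : forall S w a b,
    ~ clash S -> ~ stable n S ->
    In (w, Or a b) (fmls S) -> (~ In (w, a) (fmls S) \/ ~ In (w, b) (fmls S)) ->
    gen_step n S (add_f S [(w, a); (w, b)])
| step3_and_l : forall S w a b,
    ~ clash S -> ~ stable n S ->
    In (w, And a b) (fmls S) -> ~ In (w, a) (fmls S) -> ~ In (w, b) (fmls S) ->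
    gen_step n S (add_f S [(w, a)])
| step3_and_r : forall S w a b,
    ~ clash S -> ~ stable n S ->
    In (w, And a b) (fmls S) -> ~ In (w, a) (fmls S) -> ~ In (w, b) (fmls S) ->
    gen_step n S (add_f S [(w, b)])
| step4 : forall S w a u,
    ~ clash S -> ~ stable n S -> ~ inst3 S ->
    In (w, CStit a) (fmls S) -> is_label S u -> ucon S w u -> ~ In (u, a) (fmls S) ->
    gen_step n S (add_f S [(u, a)])
| step5 : forall S w a u,
    ~ clash S -> ~ stable n S -> ~ inst3 S -> ~ inst4 S ->
    In (w, Dia a) (fmls S) -> is_label S u -> ~ In (u, a) (fmls S) ->
    gen_step n S (add_f S [(u, a)])
| step6 : forall S w a v,
    ~ clash S -> ~ stable n S -> ~ inst3 S -> ~ inst4 S -> ~ inst5 S ->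
    In (w, Stit a) (fmls S) ->
    (forall u, is_label S u -> ucon S w u -> ~ In (u, a) (fmls S)) ->
    ~ is_label S v ->
    gen_step n S (Seq ((w, v) :: rels S) ((v, a) :: fmls S))
| step7 : forall S w a v,
    ~ clash S -> ~ stable n S -> ~ inst3 S -> ~ inst4 S -> ~ inst5 S -> ~ inst6 S ->
    In (w, Box a) (fmls S) ->
    (forall u, is_label S u -> ~ In (u, a) (fmls S)) ->
    ~ is_label S v ->
    gen_step n S (add_f S [(v, a)])
| step8 : forall S (ws : list label) k j,
    0 < n ->
    ~ clash S -> ~ stable n S -> ~ inst3 S -> ~ inst4 S -> ~ inst5 S -> ~ inst6 S ->
    ~ inst7 S -> ~ choice_consistent n S ->
    length ws = Datatypes.S n -> NoDup ws -> (forall r, In r ws -> is_root S r) ->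
    k < j -> j <= n ->
    gen_step n S (add_r S (nth k ws 0, nth j ws 0)).

Definition generated (n : nat) (w : label) (phi : form) (S : sequent) : Prop :=
  clos_refl_trans sequent (gen_step n) (Seq [] [(w, phi)]) S.

(* Main.v *)
Require Import Defs.
From Stdlib Require Import List Relations Arith Lia.
Import ListNotations.

Definition noinc (S : sequent) (r : label) : Prop := forall p, ~ edge S p r.
Definition indeg (S : sequent) : Prop :=
  forall a a' b, edge S a b -> edge S a' b -> a = a'.
Definition Inv (S : sequent) : Prop :=
  indeg S /\ forall x, exists r l, noinc S r /\ walk S r l x.

Lemma walk_app : forall S l1 l2 x y,
  walk S x (l1 ++ l2) y <-> exists m, walk S x l1 m /\ walk S m l2 y.
Proof.
  induction l1 as [|z l1 IH]; intros l2 x y; simpl.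
  - split; [intros H; exists x; auto | intros [m [-> H]]; auto].
  - split.
    + intros [He Hw]. apply IH in Hw. destruct Hw as [m [H1 H2]]. eauto.
    + intros [m [[He H1] H2]]. split; auto. apply IH. eauto.
Qed.

Lemma walk_last : forall S l x y,
  walk S x l y -> (l = [] /\ x = y) \/
  exists l' p, l = l' ++ [y] /\ walk S x l' p /\ edge S p y.
Proof.
  intros S l. induction l using rev_ind; intros x0 y H.
  - left; simpl in H; auto.
  - right. apply walk_app in H. destruct H as [m [H1 H2]].
    simpl in H2. destruct H2 as [He ->]. exists l, m. auto.
Qed.

Lemma walk_snoc : forall S l x p y, walk S x l p -> edge S p y -> walk S x (l ++ [y]) y.
Proof.
  intros. apply walk_app. exists p. simpl. auto.
Qed.

Lemma walk_mono : forall S S', (forall a b, edge S a b -> edge S' a b) ->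
  forall l x y, walk S x l y -> walk S' x l y.
Proof.
  intros S S' Hm l. induction l; intros x y H; simpl in *; [auto|].
  destruct H; split; eauto.
Qed.

Lemma walk_ucon : forall S l x y, walk S x l y -> ucon S x y.
Proof.
  intros S l. induction l; intros x y H; simpl in H.
  - subst. apply rst_refl.
  - destruct H as [H1 H2]. apply rst_trans with a; [apply rst_step; exact H1 | apply IHl; exact H2].
Qed.

Lemma noinc_walk : forall S r l, noinc S r -> walk S r l r -> l = [].
Proof.
  intros S r l Hn Hw. apply walk_last in Hw.
  destruct Hw as [[-> _] | [l' [p [_ [_ He]]]]]; auto.
  exfalso; eapply Hn; eauto.
Qed.

Lemma reach_edge : forall S r a b, indeg S -> noinc S r -> edge S a b ->
  ((exists l, walk S r l a) <-> (exists l, walk S r l b)).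
Proof.
  intros S r a b Hi Hn He. split.
  - intros [l Hw]. eexists. eapply walk_snoc; eauto.
  - intros [l Hw]. apply walk_last in Hw.
    destruct Hw as [[-> ->] | [l' [p [_ [Hw Hp]]]]].
    + exfalso; eapply Hn; eauto.
    + rewrite (Hi _ _ _ He Hp). eauto.
Qed.

Lemma reach_ucon : forall S r a b, indeg S -> noinc S r -> ucon S a b ->
  ((exists l, walk S r l a) <-> (exists l, walk S r l b)).
Proof.
  intros S r a b Hi Hn Hu. induction Hu.
  - apply reach_edge; auto.
  - tauto.
  - tauto.
  - tauto.
Qed.

Lemma walk_unique : forall S r, indeg S -> noinc S r ->
  forall l1 u l2, walk S r l1 u -> walk S r l2 u -> l1 = l2.
Proof.
  intros S r Hi Hn l1. induction l1 using rev_ind; intros u l2 H1 H2.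
  - simpl in H1; subst. symmetry; eapply noinc_walk; eauto.
  - apply walk_app in H1. destruct H1 as [m [H1 H1']].
    simpl in H1'. destruct H1' as [He ->].
    apply walk_last in H2. destruct H2 as [[-> ->] | [l' [p [-> [Hw Hp]]]]].
    + exfalso; eapply Hn; eauto.
    + rewrite (Hi _ _ _ He Hp) in H1. f_equal. eauto.
Qed.

Lemma Inv_forest : forall S, Inv S -> forestlike S.
Proof.
  intros S [Hi Hr] x Hx. destruct (Hr x) as [r [l [Hn Hw]]].
  exists r. split; [eapply walk_ucon; eauto|]. split.
  - destruct l as [|z l]; simpl in Hw.
    + subst; auto.
    + left. exists z. left. apply Hw.
  - intros u Hu Hne. split.
    + apply (reach_ucon S r r u Hi Hn Hu). exists []. reflexivity.
    + intros l1 l2 H1 H2. eapply walk_unique; eauto.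
Qed.

Lemma root_noinc : forall S r, Inv S -> is_root S r -> noinc S r.
Proof.
  intros S r [Hi Hr] [_ Hroot]. destruct (Hr r) as [r' [l [Hn Hw]]].
  destruct (Nat.eq_dec r' r) as [<-|Hne]; auto.
  exfalso.
  assert (Hu : ucon S r r') by (apply rst_sym; eapply walk_ucon; eauto).
  destruct (Hroot r' Hu Hne) as [[l2 Hw2] _].
  apply walk_last in Hw2. destruct Hw2 as [[_ E] | [l' [p [_ [_ Hp]]]]].
  - congruence.
  - eapply Hn; eauto.
Qed.

Lemma Inv_same : forall S S', rels S' = rels S -> Inv S -> Inv S'.
Proof.
  intros S S' E [Hi Hr].
  assert (Hm : forall a b, edge S a b -> edge S' a b) by (intros; unfold edge; rewrite E; auto).
  assert (Hm' : forall a b, edge S' a b -> edge S a b) by (intros a b; unfold edge; rewrite E; auto).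
  split.
  - intros a a' b H1 H2. eapply Hi; eauto.
  - intros x. destruct (Hr x) as [r [l [Hn Hw]]]. exists r, l. split.
    + intros p Hp. eapply Hn; eauto.
    + eapply walk_mono; eauto.
Qed.

Lemma step_inv : forall n S S', gen_step n S S' -> Inv S -> Inv S'.
Proof.
  intros n S0 S' Hs; destruct Hs as [| | | | |S w a v H H0 H1 H2 H3 H4 H5 H6|S w a v|S ws k j H H0 H1 H2 H3 H4 H5 H6 H7 H8 H9 H10 H11 H12]; intro HI; try (eapply Inv_same; [ | exact HI]; reflexivity).
  -
    destruct HI as [Hi Hr].
    assert (Hv : forall y, ~ In (v, y) (rels S) /\ ~ In (y, v) (rels S)).
    { intros y; split; intro Hc; apply H6; left; exists y; auto. }
    assert (Hwl : w <> v).
    { intro E; subst. apply H6. right. eauto. }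
    assert (Hmono : forall a0 b, edge S a0 b ->
              edge (Seq ((w, v) :: rels S) ((v, a) :: fmls S)) a0 b).
    { intros; unfold edge in *; simpl; auto. }
    split.
    + intros a0 a' b Ha Hb. unfold edge in *; simpl in *.
      destruct Ha as [Ea|Ha]; destruct Hb as [Eb|Hb].
      * inversion Ea; inversion Eb; congruence.
      * inversion Ea; subst. exfalso; apply (proj2 (Hv a')); auto.
      * inversion Eb; subst. exfalso; apply (proj2 (Hv a0)); auto.
      * eapply Hi; eauto.
    + intros x. destruct (Nat.eq_dec x v) as [->|Hxv].
      * destruct (Hr w) as [r [l [Hn Hw]]].
        assert (Hrv : r <> v).
        { intro E; subst. destruct l as [|z l]; simpl in Hw.
          - congruence.
          - apply (proj1 (Hv z)). apply Hw. }
        exists r, (l ++ [v]). split.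
        -- intros p Hp. unfold edge in Hp; simpl in Hp.
           destruct Hp as [E|Hp]; [inversion E; congruence | eapply Hn; eauto].
        -- eapply walk_snoc. eapply walk_mono; eauto. unfold edge; simpl; auto.
      * destruct (Hr x) as [r [l [Hn Hw]]].
        assert (Hrv : r <> v).
        { intro E; subst. destruct l as [|z l]; simpl in Hw.
          - congruence.
          - apply (proj1 (Hv z)). apply Hw. }
        exists r, l. split.
        -- intros p Hp. unfold edge in Hp; simpl in Hp.
           destruct Hp as [E|Hp]; [inversion E; congruence | eapply Hn; eauto].
        -- eapply walk_mono; eauto.
  -
    set (r1 := nth k ws 0). set (r2 := nth j ws 0).
    assert (Hr1 : is_root S r1) by (apply H10; apply nth_In; lia).
    assert (Hr2 : is_root S r2) by (apply H10; apply nth_In; lia).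
    assert (Hne : r1 <> r2).
    { intro E. unfold r1, r2 in E.
      apply (proj1 (NoDup_nth ws 0) H9 k j) in E; lia. }
    pose proof (root_noinc S r1 HI Hr1) as Hn1.
    pose proof (root_noinc S r2 HI Hr2) as Hn2.
    destruct HI as [Hi Hr].
    assert (Hmono : forall a0 b, edge S a0 b -> edge (add_r S (r1, r2)) a0 b).
    { intros; unfold edge in *; simpl; auto. }
    split.
    + intros a0 a' b Ha Hb. unfold edge in *; simpl in *.
      destruct Ha as [Ea|Ha]; destruct Hb as [Eb|Hb].
      * inversion Ea; inversion Eb; congruence.
      * inversion Ea; subst. exfalso; eapply Hn2; eauto.
      * inversion Eb; subst. exfalso; eapply Hn2; eauto.
      * eapply Hi; eauto.
    + intros x. destruct (Hr x) as [r [l [Hn Hw]]].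
      destruct (Nat.eq_dec r r2) as [->|Hrr].
      * exists r1, (r2 :: l). split.
        -- intros p Hp. unfold edge in Hp; simpl in Hp.
           destruct Hp as [E|Hp]; [inversion E; congruence | eapply Hn1; eauto].
        -- simpl. split; [unfold edge; simpl; auto|]. eapply walk_mono; eauto.
      * exists r, l. split.
        -- intros p Hp. unfold edge in Hp; simpl in Hp.
           destruct Hp as [E|Hp]; [inversion E; congruence | eapply Hn; eauto].
        -- eapply walk_mono; eauto.
Qed.

Theorem lemma4 : forall (n : nat) (phi : form) (w : label) (S : sequent),
  generated n w phi S -> forestlike S.
Proof.
  intros n phi w S H. apply Inv_forest.
  assert (H0 : Inv (Seq [] [(w, phi)])).
  { split.
    - intros a a' b Ha. destruct Ha.
    - intros x. exists x, []. split; [intros p Hp; destruct Hp | reflexivity]. }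
  revert H0. unfold generated in H. induction H; auto.
  eapply step_inv; eauto.
Qed.
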